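(* Let $\alpha\in[0,1)$, $c_{\mathrm{TX}}>0$, $\phi>0$, $\theta=\phi/c_{\mathrm{TX}}$, integers $N_S\geq B\geq 1$, $\lambda_{\mathrm{th}}=(1+\sqrt{\theta})^{-2}$, $v_{\mathrm{th}}(\lambda,0)=\sqrt{\lambda\theta}+\frac{\lambda}{2}+\sqrt{\lambda}\sqrt{\sqrt{\lambda\theta}+\frac{\lambda}{4}}$, and for $j\geq0$ let $\eta_j(\lambda)=1-\alpha^{j}(1-\sqrt{\lambda\theta})-v_{\mathrm{th}}(\lambda,0)$ and let $\lambda_j^*$ be the unique solution in $[0,\lambda_{\mathrm{th}}]$ of $\eta_j(\lambda)=0$. For $\lambda\in(0,\lambda_{\mathrm{th}})$ and $p_0\in[0,1]$, consider the process $V_0=1$ and for $k\geq0$: if $V_k>v_{\mathrm{th}}(\lambda,0)$ set $t_k=1$, $S_{M,k}=\frac{1}{\sqrt{\lambda\theta}}-\frac{1}{V_k}$; if $V_k<v_{\mathrm{th}}(\lambda,0)$ set $t_k=S_{M,k}=0$; if $V_k=v_{\mathrm{th}}(\lambda,0)$ set $t_k=1$, $S_{M,k}=\frac{1}{\sqrt{\lambda\theta}}-\frac{1}{V_k}$ with probability $p_0$ (independently over time) and $t_k=S_{M,k}=0$ otherwise; then $\hat V_k=\frac{V_k}{1+V_kt_kS_{M,k}}$ and $V_{k+1}=1-\alpha(1-\hat V_k)$. Let $\bar M_{MP}^{\lambda,p_0}=\lim_{T\to\infty}\mathbb E\left[\frac{1}{T+1}\sum_{k=0}^T\hat V_k\right]$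 and $\bar C_{MP}^{\lambda,p_0}=\lim_{T\to\infty}\mathbb E\left[\frac{1}{T+1}\sum_{k=0}^T\frac{1}{N_S}t_k(c_{\mathrm{TX}}+\phi S_{M,k})\right]$. Let $J\geq1$ be an integer, $\lambda\in(\lambda_{J-1}^*,\lambda_J^*]$ and $\hat V^*=\sqrt{\lambda\theta}$. (i) If $\lambda=\lambda_J^*$, then $$\bar M_{MP}^{\lambda,p_0}=1-\frac{\{1-\alpha^{J}[1-(1-\alpha)(1-p_0)]\}(1-\hat V^* )}{(J+1-p_0)(1-\alpha)},$$ $$\bar C_{MP}^{\lambda,p_0}=\frac{1}{N_S(J+1-p_0)}\left[c_{\mathrm{TX}}+\phi\frac{1-\hat V^*}{\hat V^*}\left(p_0\frac{1-\alpha^{J}}{1-\alpha^{J}(1-\hat V^* )}+(1-p_0)\frac{1-\alpha^{J+1}}{1-\alpha^{J+1}(1-\hat V^* )}\right)\right].$$ (ii) Otherwise ($\lambda\in(\lambda_{J-1}^*,\lambda_J^* )$), writing $\bar M_{MP}^{\lambda,1},\bar C_{MP}^{\lambda,1}$ for the (then $p_0$-independent) quantities, $$\bar M_{MP}^{\lambda,1}=1-\frac{(1-\alpha^{J})(1-\hat V^* )}{J(1-\alpha)},\qquad \bar C_{MP}^{\lambda,1}=\frac{1}{N_S J}\left[c_{\mathrm{TX}}+\phi\frac{1}{\hat V^*}\frac{(1-\alpha^{J})(1-\hat V^* )}{1-\alpha^{J}(1-\hat V^* )}\right].$$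
   Context: This is the myopic policy of the coordinated scheme with infinite ambient SNR: the fusion center tracks $X_{k+1}=\sqrt\alpha X_k+Z_k$ with unit stationary variance; $V_k$ is the prior variance, $\hat V_k$ the posterior variance (MSE) at slot $k$; at most one sensor (out of $N_S$) is activated, with local measurement SNR $S_{M,k}$ and cost $c_{\mathrm{TX}}+\phi S_{M,k}$; the per-sensor cost averages the network cost over the $N_S$ sensors. *)

(* Defs.v *)
From mathcomp Require Import all_boot all_order all_algebra.
From mathcomp Require Import all_classical all_reals all_analysis.
Set Implicit Arguments. Unset Strict Implicit. Unset Printing Implicit Defensive.
Import Order.TTheory GRing.Theory Num.Theory.
Local Open Scope ring_scope.

Section MP.
Variable R : realType.

Definition vth (th l : R) : R :=
  Num.sqrt (l * th) + l / 2 + Num.sqrt l * Num.sqrt (Num.sqrt (l * th) + l / 4).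

Definition lam_th (th : R) : R := (1 + Num.sqrt th) ^- 2.

Definition eta (al th : R) (j : nat) (l : R) : R :=
  1 - al ^+ j * (1 - Num.sqrt (l * th)) - vth th l.

(* decision at slot k given prior variance V and the tie-breaking coin b
   (b = true with probability p0) *)
Definition active (th l V : R) (b : bool) : bool :=
  (vth th l < V) || ((V == vth th l) && b).

Definition tk (th l V : R) (b : bool) : R := if active th l V b then 1 else 0.

Definition SM (th l V : R) (b : bool) : R :=
  if active th l V b then (Num.sqrt (l * th))^-1 - V^-1 else 0.

Definition Vhat (th l V : R) (b : bool) : R :=
  V / (1 + V * tk th l V b * SM th l V b).

Fixpoint Vprior (al th l : R) (w : nat -> bool) (k : nat) : R :=
  match k with
  | 0 => 1
  | k'.+1 => 1 - al * (1 - Vhat th l (Vprior al th l w k') (w k'))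
  end.

(* Expectation over the i.i.d. Bernoulli(p0) coins used in slots 0..T
   (finite probability space {ffun 'I_T.+1 -> bool}). *)
Definition coins (T : nat) (f : {ffun 'I_T.+1 -> bool}) : nat -> bool :=
  fun k => if (k < T.+1)%N then f (inord k) else false.

Definition weight (p0 : R) (T : nat) (f : {ffun 'I_T.+1 -> bool}) : R :=
  \prod_(i < T.+1) (if f i then p0 else 1 - p0).

Definition expect (p0 : R) (T : nat) (X : (nat -> bool) -> R) : R :=
  \sum_(f : {ffun 'I_T.+1 -> bool}) weight p0 f * X (coins f).

Definition Mavg (al th l p0 : R) (T : nat) : R :=
  expect p0 T (fun w =>
    (T.+1%:R)^-1 * \sum_(k < T.+1) Vhat th l (Vprior al th l w k) (w k)).

Definition Cavg (al th cTX phi : R) (NS : nat) (l p0 : R) (T : nat) : R :=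
  expect p0 T (fun w =>
    (T.+1%:R)^-1 * \sum_(k < T.+1)
      (NS%:R)^-1 * tk th l (Vprior al th l w k) (w k)
        * (cTX + phi * SM th l (Vprior al th l w k) (w k))).

End MP.

(* Main.v *)
Require Import Defs.
From mathcomp Require Import all_boot all_order all_algebra.
From mathcomp Require Import all_classical all_reals all_analysis.
From mathcomp Require Import ring lra.
Import Order.TTheory GRing.Theory Num.Theory.
Import numFieldNormedType.Exports.
Local Open Scope classical_set_scope.
Local Open Scope ring_scope.

Section Prob.
Variable R : realType.
Variables (p0 : R) (T : nat).

Lemma expectZ c (X : (nat -> bool) -> R) :
  expect p0 T (fun w => c * X w) = c * expect p0 T X.
Proof. by rewrite /expect mulr_sumr; apply: eq_bigr => f _; rewrite mulrCA. Qed.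

Lemma expectD (X Y : (nat -> bool) -> R) :
  expect p0 T (fun w => X w + Y w) = expect p0 T X + expect p0 T Y.
Proof. by rewrite /expect -big_split; apply: eq_bigr => f _; rewrite mulrDr. Qed.

Lemma expectN (X : (nat -> bool) -> R) :
  expect p0 T (fun w => - X w) = - expect p0 T X.
Proof. by rewrite /expect -sumrN; apply: eq_bigr => f _; rewrite mulrN. Qed.

Lemma expect_sum n (X : nat -> (nat -> bool) -> R) :
  expect p0 T (fun w => \sum_(k < n) X k w) = \sum_(k < n) expect p0 T (X k).
Proof.
rewrite /expect; under eq_bigr do rewrite mulr_sumr.
exact: exchange_big.
Qed.

Lemma weight_sum : \sum_(f : {ffun 'I_T.+1 -> bool}) weight p0 f = 1.
Proof.
rewrite /weight.
rewrite -(bigA_distr_bigA (fun (i : 'I_T.+1) (b : bool) => if b then p0 else 1 - p0)).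
rewrite big1 // => i _; rewrite big_bool /=; ring.
Qed.

Lemma expect_cst c : expect p0 T (fun _ => c) = c.
Proof. by rewrite /expect -mulr_suml weight_sum mul1r. Qed.

Hypotheses (p0ge0 : 0 <= p0) (p0le1 : p0 <= 1).

Lemma weight_ge0 (f : {ffun 'I_T.+1 -> bool}) : 0 <= weight p0 f.
Proof.
rewrite /weight; apply: prodr_ge0 => i _; case: (f i) => //; by rewrite subr_ge0.
Qed.

Lemma expect_norm (X : (nat -> bool) -> R) C :
  (forall w, `|X w| <= C) -> `|expect p0 T X| <= C.
Proof.
move=> HX; rewrite /expect.
apply: le_trans (ler_norm_sum _ _ _) _.
apply: le_trans (_ : \sum_(f : {ffun 'I_T.+1 -> bool}) weight p0 f * C <= _).
  apply: ler_sum => f _; rewrite normrM ger0_norm ?weight_ge0 //.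
  by apply: ler_wpM2l; [exact: weight_ge0|exact: HX].
by rewrite -mulr_suml weight_sum mul1r.
Qed.


Lemma indep k (F : (nat -> bool) -> bool -> R) :
  (k <= T)%N ->
  (forall w w', (forall i, (i < k)%N -> w i = w' i) -> F w = F w') ->
  expect p0 T (fun w => F w (w k)) =
  expect p0 T (fun w => p0 * F w true + (1 - p0) * F w false).
Proof.
move=> kT HF.
pose k0 : 'I_T.+1 := inord k.
pose flip (f : {ffun 'I_T.+1 -> bool}) : {ffun 'I_T.+1 -> bool} :=
  [ffun i => if i == k0 then ~~ f i else f i].
have flipK : involutive flip.
  move=> f; apply/ffunP => i; rewrite !ffunE.
  by case: (i == k0) => //; rewrite negbK.
have flipk0 f : flip f k0 = ~~ f k0 by rewrite ffunE eqxx.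
have split_sum (Phi : {ffun 'I_T.+1 -> bool} -> R) :
    \sum_f Phi f = \sum_(f : {ffun 'I_T.+1 -> bool} | f k0) (Phi f + Phi (flip f)).
  rewrite (bigID (fun f : {ffun 'I_T.+1 -> bool} => f k0)) /= big_split /=; congr (_ + _).
  rewrite (reindex_inj (can_inj flipK)) /=.
  by apply: eq_bigl => f; rewrite flipk0 negbK.
pose W (f : {ffun 'I_T.+1 -> bool}) :=
  \prod_(i | i != k0) (if f i then p0 else 1 - p0).
have Wflip f : weight p0 f = (if f k0 then p0 else 1 - p0) * W f.
  by rewrite /weight (bigD1 k0).
have W_flip f : W (flip f) = W f.
  by apply: eq_bigr => i /negbTE Hi; rewrite ffunE Hi.
have coins_flip f : F (coins (flip f)) = F (coins f).
  apply: HF => i ik.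
  have iT : (i < T.+1)%N by apply: leq_trans ik (leqW kT).
  rewrite /coins iT ffunE.
  suff -> : (inord i == k0) = false by [].
  apply/negbTE; apply/eqP => /(congr1 val) /=.
  rewrite !inordK // ?ltnS // => eik; move: ik; by rewrite eik ltnn.
have coinsk f : coins f k = f k0 by rewrite /coins ltnS kT.
rewrite /expect !split_sum; apply: eq_bigr => f fk0.
rewrite !Wflip flipk0 fk0 /= W_flip !coinsk flipk0 fk0 coins_flip /=.
ring.
Qed.

End Prob.

Fixpoint phs (nx : nat -> bool -> nat) (w : nat -> bool) (k : nat) : nat :=
  match k with 0 => 0%N | k'.+1 => nx (phs nx w k') (w k') end.

Lemma eq_expect (R : realType) (p0 : R) T (X Y : (nat -> bool) -> R) :
  (forall w, X w = Y w) -> expect p0 T X = expect p0 T Y.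
Proof. by move=> H; apply: eq_bigr => f _; rewrite H. Qed.

Section Poisson.
Variables (R : realType) (p0 : R) (N : nat) (nx : nat -> bool -> nat).
Variables (r : nat -> bool -> R) (h : nat -> R) (g : R).
Hypotheses (p0ge0 : 0 <= p0) (p0le1 : p0 <= 1).
Hypothesis nxN : forall m b, (m <= N)%N -> (nx m b <= N)%N.
Hypothesis Hpois : forall m, (m <= N)%N ->
  p0 * r m true + (1 - p0) * r m false - g =
  h m - (p0 * h (nx m true) + (1 - p0) * h (nx m false)).

Lemma phs_le w k : (phs nx w k <= N)%N.
Proof. by elim: k => [|k IH] //=; apply: nxN. Qed.

Lemma phs_dep k w w' : (forall i, (i < k)%N -> w i = w' i) ->
  phs nx w k = phs nx w' k.
Proof.
elim: k => [//|k IH] H /=.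
rewrite IH ?H // => i ik; apply: H; exact: ltnW.
Qed.

Lemma step T k : (k <= T)%N ->
  expect p0 T (fun w => r (phs nx w k) (w k)) =
  g + expect p0 T (fun w => h (phs nx w k))
    - expect p0 T (fun w => h (phs nx w k.+1)).
Proof.
move=> kT.
rewrite (@indep R p0 T k (fun w b => r (phs nx w k) b)) //; last first.
  by move=> w w' H; rewrite (phs_dep _ _ _ H).
have -> : expect p0 T (fun w => h (phs nx w k.+1)) =
          expect p0 T (fun w => h (nx (phs nx w k) (w k))) by [].
rewrite (@indep R p0 T k (fun w b => h (nx (phs nx w k) b))) //; last first.
  by move=> w w' H; rewrite (phs_dep _ _ _ H).
rewrite (@eq_expect R p0 T _ (fun w => g + (h (phs nx w k)
   - (p0 * h (nx (phs nx w k) true) + (1 - p0) * h (nx (phs nx w k) false))))); last first.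
  by move=> w; rewrite -Hpois ?phs_le //; ring.
by rewrite expectD expect_cst expectD expectN addrA.
Qed.

Lemma sum_eq T :
  expect p0 T (fun w => \sum_(k < T.+1) r (phs nx w k) (w k)) =
  T.+1%:R * g + h 0 - expect p0 T (fun w => h (phs nx w T.+1)).
Proof.
rewrite (@expect_sum R p0 T T.+1 (fun k w => r (phs nx w k) (w k))) /=.
under eq_bigr => k _ do rewrite (@step T k (ltn_ord k)) -addrA.
rewrite big_split /= sumr_const card_ord mulr_natl.
pose a k := expect p0 T (fun w => h (phs nx w k)).
have -> : \sum_(i < T.+1) (a i - a i.+1) = a 0%N - a T.+1.
  rewrite -(big_mkord xpredT (fun i => a i - a i.+1)).
  under eq_bigr do rewrite -opprB.
  by rewrite sumrN telescope_sumr // opprB.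
by rewrite /a /= expect_cst addrA.
Qed.

Lemma poisson_cvg :
  (fun T => expect p0 T (fun w =>
     (T.+1%:R)^-1 * \sum_(k < T.+1) r (phs nx w k) (w k))) @ \oo --> g.
Proof.
pose Hb := \sum_(m < N.+1) `|h m|.
have Hb0 : 0 <= Hb by apply: sumr_ge0.
have hb m : (m <= N)%N -> `|h m| <= Hb.
  move=> mN; rewrite /Hb (bigD1 (inord m)) //= inordK ?ltnS //.
  by rewrite lerDl; apply: sumr_ge0.
pose C := `|h 0%N| + Hb + 1.
have C0 : 0 < C by rewrite /C; apply: ltr_wpDl => //; apply: addr_ge0.
apply/cvgrPdist_le => eps eps0.
have HH : \forall t \near \oo, `|0 - harmonic t : R| <= eps / C.
  by move: (@cvg_harmonic R) => /cvgrPdist_le /(_ (eps/C) (divr_gt0 eps0 C0)).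
apply: filterS HH => T HT.
rewrite expectZ sum_eq.
set e := expect _ _ _.
have eb : `|e| <= Hb by apply: expect_norm => // w; apply: hb; apply: phs_le.
have Tpos : 0 < (T.+1%:R : R) by rewrite ltr0n.
have -> : g - (T.+1%:R)^-1 * (T.+1%:R * g + h 0%N - e) = - ((T.+1%:R)^-1 * (h 0%N - e)).
  by field; rewrite gt_eqF.
rewrite normrN normrM ger0_norm ?invr_ge0 ?ler0n //.
move: HT; rewrite /harmonic /= sub0r normrN ger0_norm ?invr_ge0 ?ler0n // => HT.
apply: le_trans (_ : (T.+1%:R)^-1 * C <= _).
  apply: ler_wpM2l; first by rewrite invr_ge0 ler0n.
  apply: le_trans (ler_normB _ _) _; rewrite /C; lra.
by rewrite -ler_pdivlMr.
Qed.

End Poisson.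

Definition act (J : nat) (c : bool) (m : nat) (b : bool) : bool :=
  (m == 0)%N || (J < m)%N || ((m == J) && (b || c)).
Definition nxt J c m b : nat := if act J c m b then 1%N else m.+1.

Section Cycle.
Variables (R : realType) (p0 : R) (J : nat) (c : bool) (r : nat -> bool -> R) (g : R).
Hypothesis J1 : (1 <= J)%N.
Definition rbar m := p0 * r m true + (1 - p0) * r m false.
Definition hJ := rbar J - g + (1 - p0) * (if c then 0 else rbar J.+1 - g).
Definition H1 := \sum_(1 <= i < J) (rbar i - g) + hJ.
Definition hh m := if (m == 0)%N then rbar 0 - g + H1
  else if (m <= J)%N then \sum_(m <= i < J) (rbar i - g) + hJ
  else rbar J.+1 - g.
Hypothesis K : H1 = 0.

Lemma nxt_le m b : (m <= J.+1)%N -> (nxt J c m b <= J.+1)%N.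
Proof.
rewrite /nxt /act; case: ifP => // /negbT.
rewrite !negb_or -leqNgt => /andP[/andP[_ mJ] _] _; by rewrite ltnS.
Qed.

Lemma hh1 : hh 1 = 0.
Proof. by rewrite /hh /= J1; exact: K. Qed.

Lemma cycle_pois m : (m <= J.+1)%N ->
  p0 * r m true + (1 - p0) * r m false - g =
  hh m - (p0 * hh (nxt J c m true) + (1 - p0) * hh (nxt J c m false)).
Proof.
move=> mJ; rewrite -/(rbar m).
have [->|m0] := eqVneq m 0%N.
  rewrite /nxt /act /= hh1 /hh /= K; ring.
case: (ltngtP m J) => [mlt|mgt|->].
- have a b : act J c m b = false.
    by rewrite /act (negbTE m0) ltnNge (ltnW mlt) /= (ltn_eqF mlt).
  rewrite /nxt !a /hh (negbTE m0) (ltnW mlt) mlt /= big_ltn //; ring.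
- have mE : m = J.+1 by apply/eqP; rewrite eqn_leq mJ mgt.
  have a b : act J c J.+1 b = true by rewrite /act ltnSn /= ?orbT.
  rewrite mE /nxt !a hh1 /hh /= leqNgt ltnSn /=; ring.
- have aT : act J c J true = true by rewrite /act eqxx orbT.
  have aF : act J c J false = c by rewrite /act eqxx ltnn (gtn_eqF J1) /=; case: c.
  rewrite /nxt aT aF; case E: c => /=; rewrite hh1 /hh (gtn_eqF J1) leqnn big_geq // add0r /hJ E /=.
    ring.
  rewrite leqNgt ltnSn /=; ring.
Qed.

End Cycle.

Section Analytic.
Variable R : realType.

Lemma fmono (th cc x y : R) : 0 < th -> 0 <= cc -> cc <= 1 -> 0 <= x -> x < y ->
  vth th x - cc * Num.sqrt (x * th) < vth th y - cc * Num.sqrt (y * th).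
Proof.
move=> th0 c0 c1 x0 xy.
have y0 : 0 <= y by apply: le_trans x0 (ltW xy).
have sxy : Num.sqrt (x * th) <= Num.sqrt (y * th).
  by rewrite ler_sqrt ?mulr_ge0 ?(ltW th0) //; apply: ler_wpM2r; [exact: ltW|exact: ltW].
have s2 : Num.sqrt x <= Num.sqrt y by rewrite ler_sqrt //; exact: ltW.
have s3 : Num.sqrt (Num.sqrt (x * th) + x / 4) <= Num.sqrt (Num.sqrt (y * th) + y / 4).
  rewrite ler_sqrt; first lra.
  by apply: addr_ge0; [exact: sqrtr_ge0| apply: divr_ge0].
have P : Num.sqrt x * Num.sqrt (Num.sqrt (x * th) + x / 4) <=
         Num.sqrt y * Num.sqrt (Num.sqrt (y * th) + y / 4).
  by apply: ler_pM => //; exact: sqrtr_ge0.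
have Q : (1 - cc) * Num.sqrt (x * th) <= (1 - cc) * Num.sqrt (y * th).
  by apply: ler_wpM2l => //; lra.
rewrite /vth; lra.
Qed.

Lemma vth_lam (th : R) : 0 < th -> vth th (lam_th th) = 1.
Proof.
move=> th0.
set s := Num.sqrt th.
have s0 : 0 < s by rewrite sqrtr_gt0.
have q0 : 0 < 1 + s by lra.
have thE : th = s ^+ 2 by rewrite sqr_sqrtr // ltW.
have L : lam_th th = ((1 + s)^-1) ^+ 2 by rewrite /lam_th exprVn.
have e1 : Num.sqrt (lam_th th * th) = s / (1 + s).
  rewrite L thE -exprMn sqrtr_sqr ger0_norm; first by rewrite mulrC.
  by apply: mulr_ge0; rewrite ?invr_ge0; lra.
have e2 : Num.sqrt (lam_th th) = (1 + s)^-1.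
  by rewrite L sqrtr_sqr ger0_norm // invr_ge0; lra.
have e3 : Num.sqrt (s / (1 + s) + lam_th th / 4) = (2 * s + 1) / (2 * (1 + s)).
  have -> : s / (1 + s) + lam_th th / 4 = ((2 * s + 1) / (2 * (1 + s))) ^+ 2.
    rewrite L; field; lra.
  rewrite sqrtr_sqr ger0_norm //; apply: divr_ge0; lra.
rewrite /vth e1 e3 e2 L; field; lra.
Qed.

End Analytic.

Section Spec.
Variables (R : realType) (al th l lJm1 lJ : R) (J : nat).
Hypotheses (al0 : 0 <= al) (al1 : al < 1) (th0 : 0 < th) (J1 : (1 <= J)%N).
Hypotheses (lJm10 : 0 <= lJm1) (eJm1 : eta al th J.-1 lJm1 = 0).
Hypotheses (lJ0 : 0 <= lJ) (eJ : eta al th J lJ = 0).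
Hypotheses (l0 : 0 < l) (llt : l < lam_th th) (lJm1l : lJm1 < l) (llJ : l <= lJ).

Definition Vs := Num.sqrt (l * th).
Definition Ue (m : nat) := 1 - al ^+ m * (1 - Vs).
Definition U (m : nat) := if (m == 0)%N then 1 else Ue m.
Definition cJ := (l < lJ).

Lemma eta_dec j x y : 0 <= x -> x < y -> eta al th j y < eta al th j x.
Proof.
move=> x0 xy.
have := @fmono R th (al ^+ j) x y th0 (exprn_ge0 _ al0) (exprn_ile1 _ al0 (ltW al1)) x0 xy.
rewrite /eta; lra.
Qed.

Lemma vth_lt1 : vth th l < 1.
Proof.
have := @fmono R th 0 l (lam_th th) th0 (lexx 0) ler01 (ltW l0) llt.
by rewrite vth_lam // !mul0r !subr0.
Qed.

Lemma Vs_gt0 : 0 < Vs.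
Proof. by rewrite /Vs sqrtr_gt0 mulr_gt0. Qed.

Lemma Vs_le_vth : Vs <= vth th l.
Proof.
rewrite /vth /Vs -/Vs.
have : 0 <= Num.sqrt l * Num.sqrt (Vs + l / 4).
  by apply: mulr_ge0; exact: sqrtr_ge0.
have : 0 < l / 2 by apply: divr_gt0.
rewrite /Vs; lra.
Qed.

Lemma Vs_lt1 : Vs < 1.
Proof. have := Vs_le_vth; have := vth_lt1; lra. Qed.

Lemma alm_le m : al ^+ m <= 1.
Proof. exact: exprn_ile1 _ al0 (ltW al1). Qed.

Lemma Ue_ge m : Vs <= Ue m.
Proof.
rewrite /Ue.
have := alm_le m; have := Vs_lt1; move=> h1 h2.
have : al ^+ m * (1 - Vs) <= 1 * (1 - Vs) by apply: ler_wpM2r; lra.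
lra.
Qed.

Lemma U_gt0 m : 0 < U m.
Proof. rewrite /U; case: ifP => _; first exact: ltr01. apply: lt_le_trans Vs_gt0 (Ue_ge m). Qed.

Lemma Ue_eta j : Ue j - vth th l = eta al th j l.
Proof. by rewrite /eta /Ue /Vs; ring. Qed.

Lemma Ue_mono m n : (m <= n)%N -> Ue m <= Ue n.
Proof.
move=> mn; rewrite /Ue.
have h := ler_wiXn2l al0 (ltW al1) mn.
have hv := Vs_lt1.
have : al ^+ n * (1 - Vs) <= al ^+ m * (1 - Vs) by apply: ler_wpM2r; [lra|exact: h].
lra.
Qed.

Lemma S1 m : (1 <= m)%N -> (m < J)%N -> Ue m < vth th l.
Proof.
move=> m1 mJ.
have h1 : Ue m <= Ue J.-1 by apply: Ue_mono; rewrite -ltnS prednK.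
have h2 := Ue_eta J.-1.
have h3 := eta_dec J.-1 _ _ lJm10 lJm1l.
by apply: le_lt_trans h1 _; rewrite -subr_lt0 h2 -eJm1.
Qed.

Lemma S2 : vth th l <= Ue J.
Proof.
rewrite -subr_ge0 Ue_eta.
case: (ltgtP l lJ) => [lt|gt|eq].
- by apply: ltW; rewrite -eJ; apply: eta_dec => //; exact: ltW.
- by move: llJ; rewrite leNgt gt.
- by rewrite eq eJ.
Qed.

Lemma S2c : cJ -> vth th l < Ue J.
Proof.
move=> lt; rewrite -subr_gt0 Ue_eta -eJ; apply: eta_dec => //; exact: ltW.
Qed.

Lemma S2nc : ~~ cJ -> Ue J = vth th l.
Proof.
rewrite /cJ -leNgt => le; have E : l = lJ by apply/eqP; rewrite eq_le le llJ.
by apply/eqP; rewrite -subr_eq0 Ue_eta E eJ.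
Qed.

Lemma S3 : vth th l < Ue J.+1.
Proof.
case C: cJ.
  by apply: lt_le_trans (S2c C) _; apply: Ue_mono.
have E := S2nc (negbT C).
have alp : 0 < al.
  rewrite lt_neqAle al0 andbT; apply/eqP => a0.
  move: E; rewrite /Ue -a0 expr0n /=.
  have -> : (J == 0)%N = false by apply/negbTE; rewrite -lt0n.
  rewrite mul0r subr0 => E; have := vth_lt1; rewrite -E ltxx.
  done.
rewrite -E /Ue exprS.
have hv := Vs_lt1.
have : 0 < al ^+ J * (1 - al) * (1 - Vs).
  by apply: mulr_gt0; [apply: mulr_gt0; [exact: exprn_gt0|rewrite subr_gt0]|rewrite subr_gt0].
set A := al ^+ J; move=> H.
have -> : 1 - al * A * (1 - Vs) = (1 - A * (1 - Vs)) + A * (1 - al) * (1 - Vs) by ring.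
lra.
Qed.

Lemma active_U m b : (m <= J.+1)%N -> active th l (U m) b = act J cJ m b.
Proof.
move=> mJ; rewrite /active /act /U.
have [->|m0] := eqVneq m 0%N.
  by rewrite /= vth_lt1.
rewrite /=.
case: (ltngtP m J) => [mlt|mgt|->].
- have h : Ue m < vth th l by apply: S1 => //; rewrite lt0n.
  by rewrite ltNge (ltW h) lt_eqF //= ?(ltn_eqF mlt).
- have mE : m = J.+1 by apply/eqP; rewrite eqn_leq mJ mgt.
  by rewrite mE S3 /= ?ltnSn ?orbT.
- rewrite ?ltnn ?eqxx /=.
  case C: cJ.
    by rewrite (S2c C) orbT.
  by rewrite (S2nc (negbT C)) ltxx eqxx orbF.
Qed.

Lemma Vhat_U m b : (m <= J.+1)%N ->
  Vhat th l (U m) b = if act J cJ m b then Vs else U m.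
Proof.
move=> mJ; rewrite /Vhat /tk /SM active_U // -/Vs.
have U0 : U m != 0 by rewrite gt_eqF // U_gt0.
have V0 : Vs != 0 by rewrite gt_eqF // Vs_gt0.
case: (act J cJ m b); last by rewrite !mulr0 addr0 divr1.
have -> : 1 + U m * 1 * (Vs^-1 - (U m)^-1) = U m / Vs by field; rewrite V0 U0.
by field; rewrite ?V0 ?U0.
Qed.

Lemma Vprior_U w k : Vprior al th l w k = U (phs (nxt J cJ) w k).
Proof.
have Hle k' : (phs (nxt J cJ) w k' <= J.+1)%N.
  by elim: k' => [//|k' IH] /=; apply: nxt_le.
elim: k => [//|k IH] /=.
rewrite IH Vhat_U // /nxt.
case A: (act J cJ _ _); first by rewrite /U /Ue /= expr1.
rewrite /U /Ue /=.
have -> : (phs (nxt J cJ) w k == 0)%N = false.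
  by apply/negbTE; apply: contraFN A => /eqP ->.
by rewrite exprS; ring.
Qed.

Lemma phs_leJ w k : (phs (nxt J cJ) w k <= J.+1)%N.
Proof. by elim: k => [//|k IH] /=; apply: nxt_le. Qed.

Lemma act_mid c i b : (1 <= i)%N -> (i < J)%N -> act J c i b = false.
Proof.
move=> i1 iJ; rewrite /act ltnNge (ltnW iJ) (ltn_eqF iJ) /= ?andbF ?orbF; apply/negbTE; by rewrite -lt0n.
Qed.

Lemma geo n : (0 < n)%N -> \sum_(1 <= i < n) al ^+ i * (1 - al) = al - al ^+ n.
Proof.
case: n => // n _; elim: n => [|n IH]; first by rewrite big_geq // expr1 subrr.
rewrite big_nat_recr //= IH [in RHS]exprS. ring.
Qed.

Lemma sumUe g : \sum_(1 <= i < J) (Ue i - g) =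
  (J%:R - 1) * (1 - g) - (1 - Vs) * ((al - al ^+ J) / (1 - al)).
Proof.
have a1 : 1 - al != 0 by rewrite subr_eq0 eq_sym lt_eqF.
rewrite (eq_big_nat _ _ (F2 := fun i => (1 - g) - ((1 - Vs) / (1 - al)) * (al ^+ i * (1 - al)))); last first.
  by move=> i _; rewrite /Ue; field.
rewrite sumrB sumr_const_nat -mulr_sumr geo //.
have -> : (1 - g) *+ (J - 1) = (J%:R - 1) * (1 - g) by rewrite -mulr_natl natrB.

by field.
Qed.

Definition rM m b := if act J cJ m b then Vs else U m.
Definition rC (NS : nat) (cTX phi : R) m b :=
  if act J cJ m b then (NS%:R)^-1 * (cTX + phi * (Vs^-1 - (U m)^-1)) else 0.

Lemma Mavg_eq p0 : Mavg al th l p0 = fun T => expect p0 T (fun w =>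
  (T.+1%:R)^-1 * \sum_(k < T.+1) rM (phs (nxt J cJ) w k) (w k)).
Proof.
apply: funext => T; apply: eq_expect => w; congr (_ * _).
by apply: eq_bigr => k _; rewrite Vprior_U Vhat_U // phs_leJ.
Qed.

Lemma Cavg_eq cTX phi NS p0 : Cavg al th cTX phi NS l p0 = fun T => expect p0 T (fun w =>
  (T.+1%:R)^-1 * \sum_(k < T.+1) rC NS cTX phi (phs (nxt J cJ) w k) (w k)).
Proof.
apply: funext => T; apply: eq_expect => w; congr (_ * _).
apply: eq_bigr => k _; rewrite Vprior_U /tk /SM active_U ?phs_leJ // /rC -/Vs.
by case: (act _ _ _ _); rewrite ?mulr1 ?mulr0 ?mul0r.
Qed.

Lemma lim_gen (p0 : R) (r : nat -> bool -> R) (g : R) : 0 <= p0 -> p0 <= 1 ->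
  H1 R p0 J cJ r g = 0 ->
  (fun T => expect p0 T (fun w =>
     (T.+1%:R)^-1 * \sum_(k < T.+1) r (phs (nxt J cJ) w k) (w k))) @ \oo --> g.
Proof.
move=> p00 p01 K.
apply: (@poisson_cvg R p0 J.+1 (nxt J cJ) r (hh R p0 J cJ r g) g p00 p01).
  exact: nxt_le.
exact: cycle_pois.
Qed.

Lemma a1_neq0 : 1 - al != 0.
Proof. by rewrite subr_eq0 eq_sym lt_eqF. Qed.
Lemma J_neq0 : (J%:R : R) != 0.
Proof. by rewrite pnatr_eq0 -lt0n. Qed.
Lemma V_neq0 : Vs != 0.
Proof. by rewrite gt_eqF // Vs_gt0. Qed.
Lemma Ue_neq0 m : Ue m != 0.
Proof. by rewrite gt_eqF //; apply: lt_le_trans Vs_gt0 (Ue_ge m). Qed.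
Lemma UJ_neq0 : 1 - al ^+ J * (1 - Vs) != 0.
Proof. exact: Ue_neq0. Qed.
Lemma UJ1_neq0 : 1 - al ^+ J.+1 * (1 - Vs) != 0.
Proof. exact: Ue_neq0. Qed.
Lemma UJ_eq : U J = Ue J.
Proof. by rewrite /U (negbTE (lt0n_neq0 J1)). Qed.
Lemma UJ1_eq : U J.+1 = Ue J.+1.
Proof. by []. Qed.
Lemma actJ1 c b : act J c J.+1 b = true.
Proof. by rewrite /act ltnSn /= ?orbT. Qed.
Lemma actJT c : act J c J true = true.
Proof. by rewrite /act eqxx /= ?orbT. Qed.
Lemma actJ c b : act J c J b = b || c.
Proof. by rewrite /act eqxx ltnn (negbTE (lt0n_neq0 J1)). Qed.

Lemma sumM (p0 g : R) : \sum_(1 <= i < J) (rbar R p0 rM i - g) =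
  (J%:R - 1) * (1 - g) - (1 - Vs) * ((al - al ^+ J) / (1 - al)).
Proof.
rewrite -sumUe; apply: eq_big_nat => i /andP[i1 iJ].
rewrite /rbar /rM !act_mid // /U (negbTE (lt0n_neq0 i1)); ring.
Qed.

Lemma sumC (p0 g : R) NS cTX phi : \sum_(1 <= i < J) (rbar R p0 (rC NS cTX phi) i - g) =
  (J%:R - 1) * (- g).
Proof.
rewrite (eq_big_nat _ _ (F2 := fun _ => - g)); last first.
  by move=> i /andP[i1 iJ]; rewrite /rbar /rC !act_mid //; ring.
rewrite sumr_const_nat.
have H : (- g) *+ (J - 1) = (J%:R - 1) * (- g) by rewrite -[(- g) *+ _]mulr_natl natrB.
exact: H.
Qed.

Lemma KM_c (p0 : R) : cJ ->
  H1 R p0 J cJ rM (1 - (1 - al ^+ J) * (1 - Vs) / (J%:R * (1 - al))) = 0.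
Proof.
move=> C; rewrite /H1 sumM /hJ /rbar /rM !actJ C /= ?orbT.
have := a1_neq0; have := J_neq0; move=> h1 h2.
by field; rewrite ?h1 ?h2.
Qed.

Lemma KM_nc (p0 : R) : p0 <= 1 -> ~~ cJ ->
  H1 R p0 J cJ rM (1 - (1 - al ^+ J * (1 - (1 - al) * (1 - p0))) * (1 - Vs)
              / ((J%:R + 1 - p0) * (1 - al))) = 0.
Proof.
move=> p01 C; rewrite /H1 sumM /hJ /rbar /rM !actJ !actJ1 (negbTE C) /= UJ_eq.
have := a1_neq0; have := J_neq0; move=> h1 h2.
have h3 : (J%:R + 1 - p0 : R) != 0.
  rewrite gt_eqF //; have : (1 : R) <= J%:R by rewrite ler1n.
  lra.
by rewrite /Ue; field; rewrite ?h1 ?h2 ?h3.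
Qed.

Lemma KC_c (p0 : R) NS cTX phi : (0 < NS)%N -> cJ ->
  H1 R p0 J cJ (rC NS cTX phi) ((NS%:R * J%:R)^-1 *
        (cTX + phi * Vs^-1 * ((1 - al ^+ J) * (1 - Vs) / (1 - al ^+ J * (1 - Vs))))) = 0.
Proof.
move=> NS0 C; rewrite /H1 sumC /hJ /rbar /rC !actJ C /= ?orbT UJ_eq /Ue.
have := J_neq0; have := V_neq0; have := UJ_neq0; move=> h1 h2 h3.
have h4 : (NS%:R : R) != 0 by rewrite pnatr_eq0 -lt0n.
by field; rewrite ?h1 ?h2 ?h3 ?h4.
Qed.

Lemma KC_nc (p0 : R) NS cTX phi : p0 <= 1 -> (0 < NS)%N -> ~~ cJ ->
  H1 R p0 J cJ (rC NS cTX phi) ((NS%:R * (J%:R + 1 - p0))^-1 *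
        (cTX + phi * ((1 - Vs) / Vs) *
           (p0 * ((1 - al ^+ J) / (1 - al ^+ J * (1 - Vs)))
            + (1 - p0) * ((1 - al ^+ J.+1) / (1 - al ^+ J.+1 * (1 - Vs)))))) = 0.
Proof.
move=> p01 NS0 C; rewrite /H1 sumC /hJ /rbar /rC !actJ !actJ1 (negbTE C) /= UJ_eq UJ1_eq /Ue.
have := J_neq0; have := V_neq0; have := UJ_neq0; have := UJ1_neq0; move=> h0 h1 h2 h3.
have h4 : (NS%:R : R) != 0 by rewrite pnatr_eq0 -lt0n.
have h5 : (J%:R + 1 - p0 : R) != 0.
  rewrite gt_eqF //; have : (1 : R) <= J%:R by rewrite ler1n.
  lra.
by field; rewrite ?h0 ?h1 ?h2 ?h3 ?h4 ?h5.
Qed.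

End Spec.

Theorem theorem2 (R : realType) (al cTX phi th : R) (NS B J : nat)
    (lJm1 lJ l p0 : R) :
  0 <= al -> al < 1 -> 0 < cTX -> 0 < phi -> th = phi / cTX ->
  (1 <= B)%N -> (B <= NS)%N -> (1 <= J)%N ->
  (* lJm1 = lambda*_{J-1}: the unique solution in [0, lambda_th] of eta_{J-1} = 0 *)
  0 <= lJm1 -> lJm1 <= lam_th th -> eta al th J.-1 lJm1 = 0 ->
  (forall x : R, 0 <= x -> x <= lam_th th -> eta al th J.-1 x = 0 -> x = lJm1) ->
  (* lJ = lambda*_J: the unique solution in [0, lambda_th] of eta_J = 0 *)
  0 <= lJ -> lJ <= lam_th th -> eta al th J lJ = 0 ->
  (forall x : R, 0 <= x -> x <= lam_th th -> eta al th J x = 0 -> x = lJ) ->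
  0 < l -> l < lam_th th -> lJm1 < l -> l <= lJ ->
  0 <= p0 -> p0 <= 1 ->
  let Vs := Num.sqrt (l * th) in
  (l = lJ ->
     (Mavg al th l p0 @ \oo -->
        (1 - (1 - al ^+ J * (1 - (1 - al) * (1 - p0))) * (1 - Vs)
              / ((J%:R + 1 - p0) * (1 - al)) : R))
     /\
     (Cavg al th cTX phi NS l p0 @ \oo -->
        ((NS%:R * (J%:R + 1 - p0))^-1 *
        (cTX + phi * ((1 - Vs) / Vs) *
           (p0 * ((1 - al ^+ J) / (1 - al ^+ J * (1 - Vs)))
            + (1 - p0) * ((1 - al ^+ J.+1) / (1 - al ^+ J.+1 * (1 - Vs))))) : R)))
  /\
  (l < lJ ->
     (Mavg al th l p0 @ \oo -->
        (1 - (1 - al ^+ J) * (1 - Vs) / (J%:R * (1 - al)) : R))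
     /\
     (Cavg al th cTX phi NS l p0 @ \oo -->
        ((NS%:R * J%:R)^-1 *
        (cTX + phi * Vs^-1 * ((1 - al ^+ J) * (1 - Vs) / (1 - al ^+ J * (1 - Vs)))) : R))).
Proof.
move=> al0 al1 cTX0 phi0 thE B1 BNS J1 lJm10 _ eJm1 _ lJ0 _ eJ _ l0 llt lJm1l llJ p00 p01 V.
have th0 : 0 < th by rewrite thE divr_gt0.
have NS0 : (0 < NS)%N by apply: leq_trans B1 BNS.
have MeqR := @Mavg_eq R al th l lJm1 lJ J al0 al1 th0 J1 lJm10 eJm1 eJ l0 llt lJm1l llJ p0.
have CeqR := @Cavg_eq R al th l lJm1 lJ J al0 al1 th0 J1 lJm10 eJm1 eJ l0 llt lJm1l llJ cTX phi NS p0.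
split => [E|C]; rewrite MeqR CeqR; split.
- apply: (@lim_gen R l lJ J J1 p0 _ _ p00 p01).
  by apply: (@KM_nc R al th l lJ J al1 J1 p0 p01); rewrite /cJ E ltxx.
- apply: (@lim_gen R l lJ J J1 p0 _ _ p00 p01).
  by apply: (@KC_nc R al th l lJ J al0 al1 th0 J1 l0 llt p0 NS cTX phi p01 NS0); rewrite /cJ E ltxx.
- apply: (@lim_gen R l lJ J J1 p0 _ _ p00 p01).
  exact: (@KM_c R al th l lJ J al1 J1 p0 C).
- apply: (@lim_gen R l lJ J J1 p0 _ _ p00 p01).
  exact: (@KC_c R al th l lJ J al0 al1 th0 J1 l0 llt p0 NS cTX phi NS0 C).
Qed.
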